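(* Let $(\mathscr{N},K)$ be a PL-RDK system whose underlying network $\mathscr{N}$ has deficiency zero and which has a positive equilibrium. If a pair of reactions in one linkage class of $\mathscr{N}$ forms an SF-pair in a species $X$, then the system has absolute concentration robustness in $X$.
   Context: A CRN $\mathscr{N}=(\mathscr{S},\mathscr{C},\mathscr{R})$ has species $\mathscr{S}$, complexes $\mathscr{C}\subset\mathbb{R}^{\mathscr{S}}_{\ge0}$ and reactions $\mathscr{R}\subset\mathscr{C}\times\mathscr{C}$ (no reaction $y\to y$). Linkage classes are the connected components of the digraph $(\mathscr{C},\mathscr{R})$. The deficiency is $\delta=n-\ell-s$ with $n$ the number of complexes, $\ell$ the number of linkage classes and $s=\dim\mathrm{span}\{y'-y:y\to y'\in\mathscr{R}\}$. A power law kinetics has rate functions $K_j(x)=k_j\prod_X x_X^{F_{jX}}$ for $x\in\mathbb{R}^{\mathscr{S}}_{>0}$, with $k_j>0$ and $F$ a real kinetic order matrix whose row $F_{j,\cdot}$ is the kinetic order vector of reaction $R_j$; it is PL-RDK if reactions with the same reactant complex have identical kinetic order vectors. An SF-pair in $X$ is a pair of reactions whose kinetic order vectors differ only in the $X$-coordinate. A positive equilibrium is $c\in\mathbb{R}^{\mathscr{S}}_{>0}$ with $\sum_{y\to y'}K_{y\to y'}(c)(y'-y)=0$. ACR in $X$: a positive equilibrium exists and all positive equilibria have the same $X$-coordinate. *)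

(* Defs.v *)
From HB Require Import structures.
From mathcomp Require Import all_boot all_order all_algebra.
From mathcomp Require Import reals exp.
Set Implicit Arguments. Unset Strict Implicit. Unset Printing Implicit Defensive.
Import Order.TTheory GRing.Theory Num.Theory.
Local Open Scope ring_scope.

(* A CRN with m species ('I_m), n complexes ('I_n) given by y : 'I_n -> 'rV_m,
   and r reactions ('I_r), reaction j being  y (src j) -> y (tgt j). *)
Section CRN.
Variables (R : realType) (m n r : nat).
Variables (y : 'I_n -> 'rV[R]_m) (src tgt : 'I_r -> 'I_n).

Definition is_CRN : Prop :=
  injective y /\
      (forall i X, 0 <= y i ord0 X) /\
      (forall j, src j != tgt j) /\
      (forall j1 j2, src j1 = src j2 -> tgt j1 = tgt j2 -> j1 = j2) /\ (* R is a set *)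
      (forall i, exists j, src j = i \/ tgt j = i) /\
    (forall X, exists i, y i ord0 X != 0).

Definition cadj : rel 'I_n :=
  fun u v => [exists j, ((src j == u) && (tgt j == v)) || ((src j == v) && (tgt j == u))].

Definition nlinkage : nat :=
  #|[set [set v | connect cadj u v] | u : 'I_n]|.

(* stoichiometric matrix (rows = reaction vectors), s = its rank *)
Definition reaction_vectors : 'M[R]_(r, m) :=
  \matrix_(j < r, X < m) (y (tgt j) ord0 X - y (src j) ord0 X).

Definition deficiency : int :=
  (n%:Z - (nlinkage)%:Z - (\rank reaction_vectors)%:Z)%R.

Definition same_linkage_class (j1 j2 : 'I_r) : bool :=
  connect cadj (src j1) (src j2).

Variables (k : 'I_r -> R) (F : 'M[R]_(r, m)).

Definition rate (j : 'I_r) (x : 'rV[R]_m) : R :=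
  k j * \prod_(X < m) powR (x ord0 X) (F j X).

Definition PL_RDK : Prop :=
  forall j1 j2, src j1 = src j2 -> row j1 F = row j2 F.

Definition SF_pair (X : 'I_m) (j1 j2 : 'I_r) : Prop :=
  F j1 X != F j2 X /\ (forall Z, Z != X -> F j1 Z = F j2 Z).

Definition positive_equilibrium (c : 'rV[R]_m) : Prop :=
  (forall X, 0 < c ord0 X) /\
  \sum_(j < r) rate j c *: (y (tgt j) - y (src j)) = 0.

Definition ACR (X : 'I_m) : Prop :=
  (exists c, positive_equilibrium c) /\
  (forall c1 c2, positive_equilibrium c1 -> positive_equilibrium c2 ->
     c1 ord0 X = c2 ord0 X).
End CRN.

(* Main.v *)
Require Import Defs.
From HB Require Import structures.
From mathcomp Require Import all_boot all_order all_algebra.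
From mathcomp Require Import reals exp.
From mathcomp Require Import zify ring.
Import Order.TTheory GRing.Theory Num.Theory.
Local Open Scope ring_scope.
Lemma sum_ind_r (R : pzRingType) (n : nat) (f : 'I_n -> R) (a : 'I_n) :
  \sum_i f i * (a == i)%:R = f a.
Proof.
rewrite (bigD1 a) //= eqxx mulr1 big1 ?addr0 // => i /negbTE.
by rewrite eq_sym => ->; rewrite mulr0.
Qed.

Lemma sum_ind_l (R : pzRingType) (n : nat) (f : 'I_n -> R) (a : 'I_n) :
  \sum_i (a == i)%:R * f i = f a.
Proof.
rewrite (bigD1 a) //= eqxx mul1r big1 ?addr0 // => i /negbTE.
by rewrite eq_sym => ->; rewrite mul0r.
Qed.

Lemma sum_ind_set (R : pzRingType) (n : nat) (S : {set 'I_n}) (a : 'I_n) :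
  \sum_(i in S) ((a == i)%:R : R) = (a \in S)%:R.
Proof.
rewrite big_mkcond /=.
transitivity (\sum_i (a == i)%:R * ((a \in S)%:R : R)).
  apply: eq_bigr => i _; case: eqP => [->|_]; first by rewrite mul1r; case: (i \in S).
  by rewrite mul0r; case: (i \in S).
by rewrite sum_ind_l.
Qed.

Lemma cadj_sym {n r : nat} (src tgt : 'I_r -> 'I_n) : symmetric (cadj src tgt).
Proof.
move=> u v; apply/existsP/existsP => -[j Hj]; exists j; by rewrite orbC.
Qed.

Lemma cadj_edge {n r : nat} (src tgt : 'I_r -> 'I_n) j : cadj src tgt (src j) (tgt j).
Proof. by apply/existsP; exists j; rewrite !eqxx. Qed.

Definition incmx (R : realType) {n r : nat} (src tgt : 'I_r -> 'I_n) : 'M[R]_(r, n) :=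
  \matrix_(j < r, i < n) ((tgt j == i)%:R - (src j == i)%:R).

Lemma inc_rank (R : realType) (n r : nat) (src tgt : 'I_r -> 'I_n) :
  (\rank (incmx R src tgt) + nlinkage src tgt <= n)%N.
Proof.
set Inc := incmx R src tgt.
have csym : connect_sym (cadj src tgt) := sym_connect_sym (cadj_sym src tgt).
rewrite /nlinkage.
set cls := [set _ | u : 'I_n].
pose C : 'M[R]_(#|cls|, n) := \matrix_(a < #|cls|, i < n) ((i \in (enum_val a : {set 'I_n}))%:R).
have clsP : forall a : 'I_#|cls|, exists u, enum_val a = [set v | connect (cadj src tgt) u v].
  move=> a; have := enum_valP a; by case/imsetP => u _ ->; exists u.
have CI : (C *m Inc^T = 0).
  apply/matrixP => a j; rewrite !mxE.
  under eq_bigr => i _ do rewrite !mxE mulrBr.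
  rewrite sumrB !sum_ind_r.
  have [u ->] := clsP a; rewrite !inE.
  by rewrite (same_connect_r csym (connect1 (cadj_edge src tgt j))) subrr.
have Cfree : row_free C.
  rewrite -kermx_eq0; apply/eqP.
  have H : forall v : 'rV[R]_#|cls|, v *m C = 0 -> v = 0.
    move=> v Hv; apply/rowP => a; rewrite mxE.
    have [u Hu] := clsP a.
    have := congr1 (fun M : 'rV[R]_n => M ord0 u) Hv; rewrite !mxE.
    rewrite (bigD1 a) //= !mxE Hu inE connect0 mulr1 big1 ?addr0 // => b Hb.
    rewrite !mxE; case Hub: (u \in enum_val b); last by rewrite mulr0.
    exfalso; move/eqP: Hb; apply; apply: enum_val_inj.
    have [u' Hu'] := clsP b; move: Hub; rewrite Hu Hu' inE => Hc.
    by apply/setP => w; rewrite !inE (same_connect csym Hc).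
  apply/row_matrixP => a; rewrite row0; apply: H.
  by rewrite -row_mul mulmx_ker row0.
have : (C <= kermx Inc^T)%MS by rewrite sub_kermx CI.
move/mxrankS; rewrite mxrank_ker mxrank_tr.
move/eqP: Cfree => ->.
have := rank_leq_col Inc; lia.
Qed.

Lemma complex_balance (R : realType) (m n r : nat)
  (y : 'I_n -> 'rV[R]_m) (src tgt : 'I_r -> 'I_n)
  (k : 'I_r -> R) (F : 'M[R]_(r, m)) (c : 'rV[R]_m) :
  deficiency y src tgt = 0 -> positive_equilibrium y src tgt k F c ->
  forall i, \sum_j rate k F j c * ((tgt j == i)%:R - (src j == i)%:R) = 0.
Proof.
move=> Hdef [_ Heq].
set Inc := incmx R src tgt.
pose Ymx : 'M[R]_(n, m) := \matrix_(i, X) y i ord0 X.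
have RV : reaction_vectors y src tgt = Inc *m Ymx.
  apply/matrixP => j X; rewrite !mxE.
  under eq_bigr => i _ do rewrite !mxE mulrBl.
  by rewrite sumrB !sum_ind_l.
have Hr := @inc_rank R n r src tgt.
have Hrk : \rank (reaction_vectors y src tgt) = \rank Inc.
  apply/eqP; rewrite eqn_leq RV mxrankM_maxl /=.
  move: Hdef; rewrite /deficiency -RV.
  have := rank_leq_col Inc; rewrite -/Inc.
  move: (\rank (reaction_vectors y src tgt)) (\rank Inc) (nlinkage src tgt) Hr => a b l.
  lia.
have Hcap := mxrank_mul_ker Inc Ymx.
rewrite -RV Hrk in Hcap.
have Hcap0 : (Inc :&: kermx Ymx)%MS = 0.
  apply/eqP; rewrite -mxrank_eq0; apply/eqP; lia.
pose u : 'rV[R]_r := \row_j rate k F j c.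
have Hu : u *m Inc = 0.
  apply/eqP; rewrite -submx0 -Hcap0 sub_capmx submxMl /= sub_kermx -mulmxA -RV.
  apply/eqP/rowP => X; rewrite !mxE.
  have HX : \sum_j rate k F j c * (y (tgt j) ord0 X - y (src j) ord0 X) = 0.
    have HX0 := congr1 (fun M : 'rV[R]_m => M ord0 X) Heq.
    simpl in HX0. rewrite summxE [RHS]mxE in HX0.
    rewrite -[RHS]HX0; apply eq_bigr => j _; by rewrite !mxE.
  rewrite -[RHS]HX; apply eq_bigr => j _; by rewrite !mxE.
move=> i; have Hi := congr1 (fun M : 'rV[R]_n => M ord0 i) Hu.
simpl in Hi; rewrite !mxE in Hi.
rewrite -[RHS]Hi; apply eq_bigr => j _; by rewrite !mxE.
Qed.

Lemma ln_prod (R : realType) (I : finType) (f : I -> R) :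
  (forall i, 0 < f i) -> ln (\prod_i f i) = \sum_i ln (f i).
Proof.
move=> Hf.
suff [] : ln (\prod_i f i) = \sum_i ln (f i) /\ 0 < \prod_i f i by [].
apply: (big_ind2 (fun a b => ln a = b /\ 0 < a)).
- by split; [rewrite ln1 | exact: ltr01].
- move=> a1 b1 a2 b2 [<- ha] [<- hb]; split; last exact: mulr_gt0.
  by rewrite lnM // posrE.
- by move=> i _; split; [|exact: Hf].
Qed.

Theorem mainTheorem6 (R : realType) (m n r : nat)
  (y : 'I_n -> 'rV[R]_m) (src tgt : 'I_r -> 'I_n)
  (k : 'I_r -> R) (F : 'M[R]_(r, m)) :
  is_CRN y src tgt ->
  (forall j, 0 < k j) ->
  PL_RDK src F ->
  deficiency y src tgt = 0 ->
  (exists c, positive_equilibrium y src tgt k F c) ->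
  forall (X : 'I_m) (j1 j2 : 'I_r),
    same_linkage_class src tgt j1 j2 ->
    SF_pair F X j1 j2 ->
    ACR y src tgt k F X.
Proof.
move=> Hcrn Hk Hrdk Hdef Hex X j1 j2 Hsl [HFX HFZ].
split => // c1 c2 H1 H2.
pose P j (c : 'rV[R]_m) := \prod_(Z < m) powR (c ord0 Z) (F j Z).
have Ppos : forall j c, positive_equilibrium y src tgt k F c -> 0 < P j c.
  by move=> j c [Hc _]; apply: prodr_gt0 => Z _; apply: powR_gt0.
have Prdk : forall j j' c, src j = src j' -> P j c = P j' c.
  move=> j j' c /Hrdk Hrow; apply: eq_bigr => Z _; congr powR.
  by have := congr1 (fun M : 'rV[R]_m => M ord0 Z) Hrow; rewrite !mxE.
pose t i := if [pick j | src j == i] is Some j then P j c1 / P j c2 else 1.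
have Ht : forall j, P j c1 = t (src j) * P j c2.
  move=> j; rewrite /t; case: pickP => [j' /eqP Hj'| /(_ j)]; last by rewrite eqxx.
  by rewrite !(Prdk j' j _ Hj') divfK // gt_eqF // Ppos.
have Bal : forall c, positive_equilibrium y src tgt k F c -> forall S : {set 'I_n},
    \sum_j k j * P j c * ((tgt j \in S)%:R - (src j \in S)%:R) = 0.
  move=> c Hc S; have CB := @complex_balance R m n r y src tgt k F c Hdef Hc.
  transitivity (\sum_(i in S) \sum_j rate k F j c * ((tgt j == i)%:R - (src j == i)%:R));
    last by apply: big1 => i _; apply: CB.
  rewrite exchange_big /=; apply: eq_bigr => j _.
  by rewrite -mulr_sumr sumrB !sum_ind_set.
have csym : connect_sym (cadj src tgt) := sym_connect_sym (cadj_sym src tgt).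
pose L := [set v | connect (cadj src tgt) (src j1) v].
have inLadj : forall j, (src j \in L) = (tgt j \in L).
  by move=> j; rewrite !inE (same_connect_r csym (connect1 (cadj_edge src tgt j))).
case: (@arg_maxP _ _ 'I_n (src j1) (fun i => i \in L) t) => [|i0 Li0 Hm].
  by rewrite inE connect0.
pose S := [set i in L | t i == t i0].
have B1 := Bal c1 H1 S; have B2 := Bal c2 H2 S.
have NoIn : forall j, src j \notin S -> tgt j \in S -> False.
  have E : \sum_j k j * P j c2 * (t i0 - t (src j)) * ((tgt j \in S)%:R - (src j \in S)%:R) = 0.
    transitivity (t i0 * (\sum_j k j * P j c2 * ((tgt j \in S)%:R - (src j \in S)%:R))
       - \sum_j k j * P j c1 * ((tgt j \in S)%:R - (src j \in S)%:R)); last first.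
      by rewrite B1 B2 mulr0 subr0.
    rewrite mulr_sumr -sumrB; apply: eq_bigr => j _; rewrite Ht; ring.
  have Hnn : forall j, 0 <= k j * P j c2 * (t i0 - t (src j)) * ((tgt j \in S)%:R - (src j \in S)%:R).
    move=> j; case Hs: (src j \in S).
      move: Hs; rewrite inE => /andP [_ /eqP ->]; by rewrite subrr mulr0 mul0r.
    case Ht': (tgt j \in S); last by rewrite subrr mulr0.
    have Ls : src j \in L by rewrite inLadj; move: Ht'; rewrite inE => /andP[].
    rewrite subr0 mulr1; apply: mulr_ge0; first by apply: mulr_ge0; apply: ltW; [apply: Hk|apply: Ppos H2].
    by rewrite subr_ge0; apply: Hm.
  move=> j Hs Ht'.
  have := @psumr_eq0P _ _ xpredT _ (fun j _ => Hnn j) E j isT.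
  rewrite Ht' (negbTE Hs) subr0 mulr1 => /eqP; rewrite !mulf_eq0 !gt_eqF //=.
  - have Ls : src j \in L by rewrite inLadj; move: Ht'; rewrite inE => /andP[].
    rewrite subr_gt0 lt_neqAle; apply/andP; split; last exact: Hm.
    by move: Hs; rewrite inE Ls /=.
  - exact: Ppos H2.
have NoOut : forall j, src j \in S -> tgt j \notin S -> False.
  have E : \sum_j (- (k j * P j c2 * ((tgt j \in S)%:R - (src j \in S)%:R))) = 0.
    by rewrite sumrN B2 oppr0.
  have Hnn : forall j, 0 <= - (k j * P j c2 * ((tgt j \in S)%:R - (src j \in S)%:R)).
    move=> j; case Hs: (src j \in S); case Ht': (tgt j \in S); rewrite ?subrr ?mulr0 ?oppr0 //.
      by rewrite sub0r mulrN1 opprK; apply: ltW; apply: mulr_gt0; [apply: Hk|apply: Ppos H2].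
    by exfalso; apply: (NoIn j); rewrite ?Hs ?Ht'.
  move=> j Hs Ht'.
  have := @psumr_eq0P _ _ xpredT _ (fun j _ => Hnn j) E j isT.
  rewrite (negbTE Ht') Hs sub0r mulrN1 opprK => /eqP; rewrite mulf_eq0 !gt_eqF //.
  - exact: Ppos H2.
have Sclosed : closed (cadj src tgt) S.
  move=> u v /existsP [j /orP [/andP [/eqP <- /eqP <-] | /andP [/eqP <- /eqP <-]]];
    case Hs: (src j \in S); case Ht': (tgt j \in S) => //; exfalso;
    first [ (apply: (NoOut j); rewrite ?Hs ?Ht'; done) | (apply: (NoIn j); rewrite ?Hs ?Ht'; done) ].
have i0S : i0 \in S by rewrite inE Li0 eqxx.
have s1S : src j1 \in S.
  by rewrite (closed_connect Sclosed (_ : connect (cadj src tgt) (src j1) i0)) //; move: Li0; rewrite inE.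
have s2S : src j2 \in S by rewrite -(closed_connect Sclosed Hsl).
have Tq : t (src j1) = t (src j2).
  by move: s1S s2S; rewrite !inE => /andP [_ /eqP ->] /andP [_ /eqP ->].
have EqP : P j1 c1 * P j2 c2 = P j2 c1 * P j1 c2.
  by rewrite !Ht Tq; ring.
have Hc1 : forall Z, 0 < c1 ord0 Z by case: H1.
have Hc2 : forall Z, 0 < c2 ord0 Z by case: H2.
have lnP : forall j (c : 'rV[R]_m), (forall Z, 0 < c ord0 Z) -> ln (P j c) = \sum_Z F j Z * ln (c ord0 Z).
  move=> j c Hc; rewrite ln_prod; last by move=> Z; apply: powR_gt0.
  by apply: eq_bigr => Z _; rewrite ln_powR.
have := congr1 (@ln R) EqP.
rewrite !lnM ?posrE ?(Ppos _ _ H1) ?(Ppos _ _ H2) // !lnP //.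
move=> /eqP; rewrite -subr_eq0 => /eqP Hs.
have Hs' : \sum_Z (F j1 Z - F j2 Z) * (ln (c1 ord0 Z) - ln (c2 ord0 Z)) = 0.
  rewrite -[RHS]Hs -!big_split -!sumrB /=; apply: eq_bigr => Z _; ring.
rewrite (bigD1 X) //= big1 ?addr0 in Hs'; last first.
  by move=> Z HZ; rewrite HFZ // subrr mul0r.
move/eqP: Hs'; rewrite mulf_eq0 subr_eq0 (negbTE HFX) /= subr_eq0 => /eqP.
by move/ln_inj; apply; rewrite posrE.
Qed.
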